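(* Let $\sigma_0,\sigma_\epsilon>0$, $\theta_0\in\mathbb{R}$, prior $\Theta\sim N(\theta_0,\sigma_0^2)$, signal $X=\Theta+\epsilon$ with $\epsilon\sim\mathrm{Cauchy}(0,\sigma_\epsilon)$ independent of $\Theta$, and let $\theta_1(x)=\mathbb{E}[\Theta\mid X=x]$. With $a=\sigma_\epsilon/\sigma_0$, the DeGroot coefficient $\omega=\frac{d\theta_1}{dx}\big|_{x=\theta_0}$ is $$\omega=1+a^2-\sqrt{\frac{2}{\pi}}\,\frac{a}{\operatorname{erfcx}(a/\sqrt2)},$$ where $\operatorname{erfcx}(y)=e^{y^2}\bigl(1-\frac{2}{\sqrt\pi}\int_0^y e^{-t^2}dt\bigr)$.
   Context: $\mathrm{Cauchy}(\mu,s)$ has density $t\mapsto\frac{1}{\pi s[1+((t-\mu)/s)^2]}$. The posterior mean is $\theta_1(x)=\frac{\int\theta f_\Theta(\theta)l_\epsilon(x-\theta)d\theta}{\int f_\Theta(\theta)l_\epsilon(x-\theta)d\theta}$. The DeGroot coefficient is the slope of the posterior mean in the signal at $x=\theta_0$ (local linearization $\theta_1\approx\theta_0+\omega(x-\theta_0)$). *)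

(* Defs.v *)
From Stdlib Require Import Reals.
From Coquelicot Require Import Coquelicot.
Open Scope R_scope.

Definition normal_pdf (m s t : R) : R :=
  / (s * sqrt (2 * PI)) * exp (- ((t - m) ^ 2) / (2 * s ^ 2)).

Definition cauchy_pdf (mu s t : R) : R :=
  / (PI * s * (1 + ((t - mu) / s) ^ 2)).

Definition integral_R (f : R -> R) : R :=
  RInt_gen f (Rbar_locally m_infty) (Rbar_locally p_infty).

(* Posterior mean theta_1(x) = E[Theta | X = x] for prior N(th0, s0^2) and
   additive independent Cauchy(0, se) noise, via Bayes' formula. *)
Definition posterior_mean (th0 s0 se x : R) : R :=
  integral_R (fun th => th * normal_pdf th0 s0 th * cauchy_pdf 0 se (x - th))
  / integral_R (fun th => normal_pdf th0 s0 th * cauchy_pdf 0 se (x - th)).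

Definition erfcx (y : R) : R :=
  exp (y ^ 2) * (1 - 2 / sqrt PI * RInt (fun t => exp (- t ^ 2)) 0 y).

(* Main.v *)
Require Import Defs.
From Stdlib Require Import Reals.
From Coquelicot Require Import Coquelicot.
From Stdlib Require Import Lra Psatz Classical_Prop.
Open Scope R_scope.


Definition Icv (f : R -> R) (l : R) :=
  (forall a b, ex_RInt f a b) /\
  forall eps, 0 < eps -> exists M, forall a b, a <= -M -> M <= b ->
    Rabs (RInt f a b - l) <= eps.

Lemma RInt_scal_R (f : R -> R) a b k : ex_RInt f a b ->
  RInt (fun x => k * f x) a b = k * RInt f a b.
Proof. intros H. apply (RInt_scal f a b k H). Qed.

Lemma RInt_plus_R (f g : R -> R) a b : ex_RInt f a b -> ex_RInt g a b ->
  RInt (fun x => f x + g x) a b = RInt f a b + RInt g a b.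
Proof. intros H1 H2. apply (RInt_plus f g a b H1 H2). Qed.

Lemma RInt_minus_R (f g : R -> R) a b : ex_RInt f a b -> ex_RInt g a b ->
  RInt (fun x => f x - g x) a b = RInt f a b - RInt g a b.
Proof. intros H1 H2. apply (RInt_minus f g a b H1 H2). Qed.

Lemma ex_RInt_scal_R (f : R -> R) a b k : ex_RInt f a b ->
  ex_RInt (fun x => k * f x) a b.
Proof. intros H. apply (ex_RInt_scal f a b k H). Qed.

Lemma ex_RInt_plus_R (f g : R -> R) a b : ex_RInt f a b -> ex_RInt g a b ->
  ex_RInt (fun x => f x + g x) a b.
Proof. intros H1 H2. apply (ex_RInt_plus f g a b H1 H2). Qed.

Lemma ex_RInt_minus_R (f g : R -> R) a b : ex_RInt f a b -> ex_RInt g a b ->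
  ex_RInt (fun x => f x - g x) a b.
Proof. intros H1 H2. apply (ex_RInt_minus f g a b H1 H2). Qed.

Lemma cont_ex (f : R -> R) : (forall x, continuous f x) -> forall a b, ex_RInt f a b.
Proof. intros H a b. apply (ex_RInt_continuous (V:=R_CompleteNormedModule)). intros; apply H. Qed.

Lemma Icv_RInt_gen f l : Icv f l -> integral_R f = l.
Proof.
  intros [Hex Hc]. unfold integral_R.
  apply is_RInt_gen_unique.
  intros P [eps HP].
  destruct (Hc (eps/2)) as [M HM]. { destruct eps; simpl; lra. }
  exists (fun a => a < -M) (fun b => M < b).
  - exists (-M). auto.
  - exists M. auto.
  - intros a b Ha Hb. exists (RInt f a b). split.
    + apply RInt_correct. apply Hex.
    + apply HP. change (Rabs (RInt f a b - l) < eps).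
      pose proof (HM a b ltac:(lra) ltac:(lra)). destruct eps; simpl in *. lra.
Qed.

Lemma Icv_ext f g l : (forall x, f x = g x) -> Icv f l -> Icv g l.
Proof.
  intros E [Hex Hc]. split.
  - intros a b. apply (ex_RInt_ext f). intros; apply E. apply Hex.
  - intros eps Heps. destruct (Hc eps Heps) as [M HM]. exists M. intros a b Ha Hb.
    rewrite <- (RInt_ext f). apply HM; auto. intros; apply E.
Qed.

Lemma Icv_plus f g l m : Icv f l -> Icv g m -> Icv (fun x => f x + g x) (l + m).
Proof.
  intros [Hf Cf] [Hg Cg]. split.
  - intros a b. apply ex_RInt_plus_R; auto.
  - intros eps Heps. destruct (Cf (eps/2)) as [M1 H1]; [lra|].
    destruct (Cg (eps/2)) as [M2 H2]; [lra|].
    exists (Rmax M1 M2). intros a b Ha Hb.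
    rewrite RInt_plus_R; auto.
    pose proof (Rmax_l M1 M2); pose proof (Rmax_r M1 M2).
    pose proof (H1 a b ltac:(lra) ltac:(lra)). pose proof (H2 a b ltac:(lra) ltac:(lra)).
    revert H3 H4. unfold Rabs; repeat destruct Rcase_abs; lra.
Qed.

Lemma Icv_scal f l k : Icv f l -> Icv (fun x => k * f x) (k * l).
Proof.
  intros [Hf Cf]. split.
  - intros a b. apply ex_RInt_scal_R; auto.
  - intros eps Heps. destruct (Cf (eps/(Rabs k + 1))) as [M H1].
    { apply Rdiv_lt_0_compat; auto. pose proof (Rabs_pos k); lra. }
    exists M. intros a b Ha Hb. rewrite RInt_scal_R; auto.
    replace (k * RInt f a b - k * l) with (k * (RInt f a b - l)) by ring.
    rewrite Rabs_mult. pose proof (H1 a b Ha Hb). pose proof (Rabs_pos k).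
    pose proof (Rabs_pos (RInt f a b - l)).
    apply Rle_trans with (Rabs k * (eps / (Rabs k + 1))).
    apply Rmult_le_compat_l; auto.
    apply Rle_trans with ((Rabs k + 1) * (eps / (Rabs k + 1))).
    apply Rmult_le_compat_r; [|lra]. apply Rlt_le, Rdiv_lt_0_compat; lra.
    right; field; lra.
Qed.

Lemma Icv_minus f g l m : Icv f l -> Icv g m -> Icv (fun x => f x - g x) (l - m).
Proof.
  intros H1 H2. apply (Icv_ext (fun x => f x + (-1) * g x)).
  intros; ring. replace (l - m) with (l + (-1) * m) by ring.
  apply Icv_plus; auto. apply Icv_scal; auto.
Qed.

Lemma Icv_unique f l m : Icv f l -> Icv f m -> l = m.
Proof.
  intros [Hf Cf] [_ Cg].
  apply Rminus_diag_uniq. apply Rabs_eq_0.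
  apply Rle_antisym; [|apply Rabs_pos].
  apply Rnot_lt_le. intros Hlt.
  destruct (Cf (Rabs (l - m) / 3)) as [M1 H1]; [lra|].
  destruct (Cg (Rabs (l - m) / 3)) as [M2 H2]; [lra|].
  pose (M := Rmax M1 M2). pose proof (Rmax_l M1 M2); pose proof (Rmax_r M1 M2).
  specialize (H1 (-M) M ltac:(unfold M; lra) ltac:(unfold M; lra)).
  specialize (H2 (-M) M ltac:(unfold M; lra) ltac:(unfold M; lra)).
  revert H1 H2 Hlt. unfold Rabs; repeat destruct Rcase_abs; lra.
Qed.

Lemma Icv_le f g l m : Icv f l -> Icv g m -> (forall x, f x <= g x) -> l <= m.
Proof.
  intros [Hf Cf] [Hg Cg] Hle.
  apply Rnot_lt_le. intros Hlt.
  destruct (Cf ((l - m) / 3)) as [M1 H1]; [lra|].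
  destruct (Cg ((l - m) / 3)) as [M2 H2]; [lra|].
  pose (M := Rmax (Rmax M1 M2) 0). pose proof (Rmax_l M1 M2); pose proof (Rmax_r M1 M2).
  pose proof (Rmax_l (Rmax M1 M2) 0); pose proof (Rmax_r (Rmax M1 M2) 0).
  specialize (H1 (-M) M ltac:(unfold M; lra) ltac:(unfold M; lra)).
  specialize (H2 (-M) M ltac:(unfold M; lra) ltac:(unfold M; lra)).
  assert (RInt f (-M) M <= RInt g (-M) M).
  { apply RInt_le; auto. unfold M; lra. }
  revert H1 H2 H5. unfold Rabs; repeat destruct Rcase_abs; lra.
Qed.

Lemma RInt_pos_mono f a b a' b' : (forall x, 0 <= f x) -> (forall a b, ex_RInt f a b) ->
  a' <= a -> a <= b -> b <= b' -> RInt f a b <= RInt f a' b'.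
Proof.
  intros Hp He H1 H2 H3.
  rewrite <- (RInt_Chasles f a' a b'); auto.
  rewrite <- (RInt_Chasles f a b b'); auto.
  change plus with Rplus.
  assert (0 <= RInt f a' a) by (apply RInt_ge_0; auto).
  assert (0 <= RInt f b b') by (apply RInt_ge_0; auto).
  lra.
Qed.

Lemma Icv_pos_bound f l : (forall x, 0 <= f x) -> Icv f l ->
  forall a b, a <= b -> RInt f a b <= l.
Proof.
  intros Hp [Hf Cf] a b Hab.
  apply Rnot_lt_le. intros Hlt.
  destruct (Cf ((RInt f a b - l)/2)) as [M HM]; [lra|].
  pose (M' := Rmax M (Rmax (Rabs a) (Rabs b))).
  pose proof (Rmax_l M (Rmax (Rabs a) (Rabs b))).
  pose proof (Rmax_r M (Rmax (Rabs a) (Rabs b))).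
  pose proof (Rmax_l (Rabs a) (Rabs b)). pose proof (Rmax_r (Rabs a) (Rabs b)).
  pose proof (Rle_abs a). pose proof (Rle_abs b). pose proof (Rabs_Ropp a).
  pose proof (Rle_abs (-a)).
  specialize (HM (-M') M' ltac:(unfold M'; lra) ltac:(unfold M'; lra)).
  assert (RInt f a b <= RInt f (-M') M').
  { apply RInt_pos_mono; auto; unfold M'; lra. }
  revert HM. unfold Rabs at 1; destruct Rcase_abs; lra.
Qed.

Lemma Icv_pos_ge0 f l : (forall x, 0 <= f x) -> Icv f l -> 0 <= l.
Proof.
  intros Hp H. apply Rle_trans with (RInt f 0 0).
  rewrite RInt_point. right; reflexivity.
  apply Icv_pos_bound; auto; lra.
Qed.

Lemma RInt_ext_R (f g : R -> R) a b : (forall x, f x = g x) -> RInt f a b = RInt g a b.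
Proof. intros H. apply RInt_ext. intros; apply H. Qed.

Lemma RInt_swap_R (f : R -> R) a b : ex_RInt f a b -> RInt f b a = - RInt f a b.
Proof. intros H. rewrite <- opp_RInt_swap by apply H. reflexivity. Qed.

Lemma RInt_opp_R (f : R -> R) a b : ex_RInt f a b -> RInt (fun x => - f x) a b = - RInt f a b.
Proof. intros H. apply (RInt_opp f a b H). Qed.

Lemma cont_of_deriv (f : R -> R) x : ex_derive f x -> continuous f x.
Proof. intros H. apply (ex_derive_continuous (K:=R_AbsRing) (V:=R_NormedModule)). exact H. Qed.

Lemma RInt_const_R (c a b : R) : RInt (fun _ => c) a b = (b - a) * c.
Proof. apply (RInt_const (V:=R_CompleteNormedModule)). Qed.

Lemma is_derive_eq (f : R -> R) x l l' : is_derive f x l -> l = l' -> is_derive f x l'.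
Proof. intros H <-; exact H. Qed.

Ltac simpl_R := unfold minus, plus, opp, scal, zero, one, mult; simpl; unfold mult; simpl; try unfold Rminus.

Ltac eqR := match goal with |- @eq _ ?x ?y => change (@eq R x y) end.


Lemma Icv_lin f l s m : Icv f l -> 0 < s -> Icv (fun w => s * f (s * w + m)) l.
Proof.
  intros [Hf Cf] Hs. split.
  - intros a b. apply (ex_RInt_comp_lin f s m a b). apply Hf.
  - intros eps Heps. destruct (Cf eps Heps) as [M HM].
    exists ((Rabs M + Rabs m) / s). intros a b Ha Hb.
    assert (E : RInt (fun w => s * f (s * w + m)) a b = RInt f (s * a + m) (s * b + m))
      by exact (RInt_comp_lin f s m a b (Hf _ _)).
    rewrite E.
    apply HM.
    + assert (s * a <= s * (- ((Rabs M + Rabs m) / s))) by (apply Rmult_le_compat_l; lra).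
      replace (s * (- ((Rabs M + Rabs m) / s))) with (- (Rabs M + Rabs m)) in H by (field; lra).
      pose proof (Rle_abs m); pose proof (Rle_abs M). lra.
    + assert (s * ((Rabs M + Rabs m) / s) <= s * b) by (apply Rmult_le_compat_l; lra).
      replace (s * ((Rabs M + Rabs m) / s)) with ((Rabs M + Rabs m)) in H by (field; lra).
      pose proof (Rle_abs (-m)); pose proof (Rle_abs M). rewrite Rabs_Ropp in H0. lra.
Qed.

Lemma RInt_odd0 (f : R -> R) b : (forall x, f (- x) = - f x) -> (forall a b, ex_RInt f a b) ->
  RInt f (-b) b = 0.
Proof.
  intros Ho Hf.
  assert (E : RInt (fun y => -1 * (f (-1 * y + 0))) (-b) b = RInt f (-1 * -b + 0) (-1 * b + 0)).
  { exact (RInt_comp_lin f (-1) 0 (-b) b (Hf _ _)). }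
  rewrite (RInt_ext_R _ f) in E.
  2:{ intros x. replace (-1 * x + 0) with (- x) by ring. rewrite Ho. ring. }
  replace (-1 * - b + 0) with b in E by ring. replace (-1 * b + 0) with (-b) in E by ring.
  rewrite (RInt_swap_R f (-b) b (Hf _ _)) in E.
  lra.
Qed.

Lemma RInt_even (f : R -> R) b : (forall x, f (- x) = f x) -> (forall a b, ex_RInt f a b) ->
  RInt f (-b) 0 = RInt f 0 b.
Proof.
  intros Ho Hf.
  assert (E : RInt (fun y => -1 * (f (-1 * y + 0))) 0 b = RInt f (-1 * 0 + 0) (-1 * b + 0)).
  { exact (RInt_comp_lin f (-1) 0 0 b (Hf _ _)). }
  rewrite (RInt_ext_R _ (fun x => - f x)) in E.
  2:{ intros x. replace (-1 * x + 0) with (- x) by ring. rewrite Ho. ring. }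
  replace (-1 * 0 + 0) with 0 in E by ring. replace (-1 * b + 0) with (-b) in E by ring.
  rewrite (RInt_swap_R f (-b) 0 (Hf _ _)) in E.
  rewrite (RInt_opp_R f 0 b (Hf _ _)) in E.
  lra.
Qed.

Lemma Icv_odd f l : (forall x, f (- x) = - f x) -> Icv f l -> l = 0.
Proof.
  intros Ho [Hf Cf].
  apply Rabs_eq_0. apply Rle_antisym; [|apply Rabs_pos].
  apply Rnot_lt_le. intros Hlt.
  destruct (Cf (Rabs l / 2)) as [M HM]; [lra|].
  specialize (HM (- Rabs M) (Rabs M)). rewrite RInt_odd0 in HM; auto.
  pose proof (Rle_abs M). pose proof (Rle_abs (-M)). rewrite Rabs_Ropp in H0.
  specialize (HM ltac:(lra) ltac:(lra)).
  rewrite Rminus_0_l, Rabs_Ropp in HM. lra.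
Qed.

Lemma Icv_exist_pos f : (forall x, continuous f x) -> (forall x, 0 <= f x) ->
  (exists C, forall a b, a <= b -> RInt f a b <= C) -> exists l, Icv f l.
Proof.
  intros Hc Hp [C HC].
  pose proof (cont_ex f Hc) as Hf.
  set (E := fun r => exists a b, a <= b /\ r = RInt f a b).
  destruct (completeness E) as [L [HL1 HL2]].
  { exists C. intros r [a [b [Hab ->]]]. apply HC; auto. }
  { exists (RInt f 0 0), 0, 0. split; auto; lra. }
  exists L. split; auto.
  intros eps Heps.
  assert (exists a0 b0, a0 <= b0 /\ L - eps < RInt f a0 b0) as [a0 [b0 [Hab H0]]].
  { apply Classical_Prop.NNPP. intros Hn.
    assert (L <= L - eps); [|lra].
    apply HL2. intros r [a [b [Hab ->]]]. apply Rnot_lt_le. intros Hlt. apply Hn.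
    exists a, b. split; auto. }
  exists (Rmax (Rabs a0) (Rabs b0)). intros a b Ha Hb.
  pose proof (Rmax_l (Rabs a0) (Rabs b0)). pose proof (Rmax_r (Rabs a0) (Rabs b0)).
  pose proof (Rle_abs a0). pose proof (Rle_abs (-a0)) as Ha0. rewrite Rabs_Ropp in Ha0.
  pose proof (Rle_abs b0).
  assert (RInt f a0 b0 <= RInt f a b) by (apply RInt_pos_mono; auto; lra).
  assert (RInt f a b <= L) by (apply HL1; exists a, b; split; auto; lra).
  unfold Rabs; destruct Rcase_abs; lra.
Qed.

Definition q (u : R) := / (1 + u ^ 2).

Lemma q_pos u : 0 < q u.
Proof. unfold q. apply Rinv_0_lt_compat. nra. Qed.

Lemma q_cont u : continuous q u.
Proof. apply cont_of_deriv. unfold q. auto_derive. nra. Qed.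

Lemma RInt_q a b : RInt q a b = atan b - atan a.
Proof.
  apply is_RInt_unique.
  apply (is_RInt_derive atan q).
  - intros x _. unfold q. replace (x ^ 2) with (Rsqr x) by (unfold Rsqr; ring). apply is_derive_atan.
  - intros x _. apply q_cont.
Qed.

Lemma atan_le_id y : 0 <= y -> atan y <= y.
Proof.
  intros Hy. pose proof (RInt_q 0 y) as H. rewrite atan_0, Rminus_0_r in H. rewrite <- H.
  pose proof (RInt_const_R 1 0 y) as H2. rewrite Rminus_0_r, Rmult_1_r in H2.
  apply Rle_trans with (RInt (fun _ => 1) 0 y); [| right; exact H2].
  apply RInt_le; auto.
  - apply cont_ex, q_cont.
  - apply ex_RInt_const.
  - intros x Hx. unfold q. rewrite <- Rinv_1. apply Rinv_le_contravar; nra.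
Qed.

Lemma atan_big b : 0 < b -> PI / 2 - / b <= atan b.
Proof.
  intros Hb. pose proof (atan_inv b Hb). pose proof (atan_le_id (/ b)).
  assert (0 < / b) by (apply Rinv_0_lt_compat; auto). lra.
Qed.

Lemma Icv_q : Icv q PI.
Proof.
  split. { apply cont_ex, q_cont. }
  intros eps Heps. exists (Rmax 1 (2 / eps)). intros a b Ha Hb.
  pose proof (Rmax_l 1 (2/eps)). pose proof (Rmax_r 1 (2/eps)).
  assert (0 < 2/eps) by (apply Rdiv_lt_0_compat; lra).
  rewrite RInt_q.
  pose proof (atan_big b ltac:(lra)). pose proof (atan_big (-a) ltac:(lra)).
  rewrite atan_opp in H3.
  pose proof (atan_bound a). pose proof (atan_bound b).
  assert (/ b <= eps / 2).
  { replace (eps / 2) with (/ (2 / eps)) by (field; lra). apply Rinv_le_contravar; lra. }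
  assert (/ (- a) <= eps / 2).
  { replace (eps / 2) with (/ (2 / eps)) by (field; lra). apply Rinv_le_contravar; lra. }
  unfold Rabs; destruct Rcase_abs; lra.
Qed.

Lemma Icv_dom f C : (forall x, continuous f x) -> (forall x, Rabs (f x) <= C * q x) ->
  exists l, Icv f l.
Proof.
  intros Hc Hd.
  assert (Hg : exists l, Icv (fun x => f x + C * q x) l).
  { apply Icv_exist_pos.
    - intros x. apply (continuous_plus f). apply Hc.
      apply (continuous_scal_r C q). apply q_cont.
    - intros x. specialize (Hd x). revert Hd. unfold Rabs; destruct Rcase_abs; lra.
    - exists (2 * C * PI). intros a b Hab.
      apply Rle_trans with (RInt (fun x => 2 * C * q x) a b).
      + apply RInt_le; auto.
        * apply cont_ex. intros x. apply (continuous_plus f). apply Hc.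
          apply (continuous_scal_r C q). apply q_cont.
        * apply ex_RInt_scal_R, cont_ex, q_cont.
        * intros x _. specialize (Hd x). revert Hd. unfold Rabs; destruct Rcase_abs; lra.
      + rewrite RInt_scal_R by apply cont_ex, q_cont.
        assert (0 <= C). { specialize (Hd 0). pose proof (q_pos 0). pose proof (Rabs_pos (f 0)). nra. }
        pose proof (Icv_pos_bound q PI (fun x => Rlt_le _ _ (q_pos x)) Icv_q a b Hab).
        apply Rmult_le_compat_l; lra. }
  destruct Hg as [l Hl]. exists (l - C * PI).
  apply (Icv_ext (fun x => (f x + C * q x) - C * q x)). intros; ring.
  apply Icv_minus; auto. apply Icv_scal, Icv_q.
Qed.

Lemma Icv_exact P p : (forall x, is_derive P x (p x)) -> (forall x, continuous p x) ->
  (forall eps, 0 < eps -> exists M, forall x, M <= Rabs x -> Rabs (P x) <= eps) ->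
  Icv p 0.
Proof.
  intros Hd Hc Hlim. split. { apply cont_ex; auto. }
  intros eps Heps. destruct (Hlim (eps/2)) as [M HM]; [lra|].
  exists (Rabs M). intros a b Ha Hb.
  assert (H : RInt p a b = P b - P a).
  { apply is_RInt_unique. apply (is_RInt_derive (V:=R_CompleteNormedModule) P p); auto. }
  rewrite H. pose proof (Rle_abs M). pose proof (Rabs_pos M).
  assert (HA : Rabs (P a) <= eps/2). { apply HM. rewrite Rabs_left1; lra. }
  assert (HB : Rabs (P b) <= eps/2). { apply HM. rewrite Rabs_right; lra. }
  revert HA HB. unfold Rabs; repeat destruct Rcase_abs; lra.
Qed.


Lemma lip (f df : R -> R) a b B :
  (forall t, Rmin a b <= t <= Rmax a b -> is_derive f t (df t)) ->
  (forall t, Rmin a b <= t <= Rmax a b -> Rabs (df t) <= B) ->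
  Rabs (f b - f a) <= B * Rabs (b - a).
Proof.
  intros Hd Hb.
  destruct (MVT_gen f a b df) as [c [Hc E]].
  - intros x Hx. apply Hd. lra.
  - intros x Hx. apply continuity_pt_filterlim. apply cont_of_deriv.
    eexists. apply Hd. exact Hx.
  - rewrite E, Rabs_mult. apply Rmult_le_compat_r. apply Rabs_pos. apply Hb. exact Hc.
Qed.

Lemma taylor2 (f f1 f2 : R -> R) x0 d B h :
  (forall t, Rabs (t - x0) <= d -> is_derive f t (f1 t) /\ is_derive f1 t (f2 t) /\ Rabs (f2 t) <= B) ->
  Rabs h <= d ->
  Rabs (f (x0 + h) - f x0 - h * f1 x0) <= B * h ^ 2.
Proof.
  intros H Hh.
  set (Rf := fun s => f (x0 + s) - f x0 - s * f1 x0).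
  assert (Hr : forall s, Rmin 0 h <= s <= Rmax 0 h ->
            is_derive Rf s (f1 (x0 + s) - f1 x0)).
  { intros s Hs. unfold Rf.
    assert (Hs' : Rabs (x0 + s - x0) <= d).
    { replace (x0 + s - x0) with s by ring. revert Hs Hh. unfold Rmin, Rmax, Rabs.
      repeat destruct Rle_dec; repeat destruct Rcase_abs; lra. }
    destruct (H (x0 + s) Hs') as [D1 _].
    eapply is_derive_eq.
    { apply (is_derive_minus (K:=R_AbsRing) (V:=R_NormedModule)).
      apply (is_derive_minus (K:=R_AbsRing) (V:=R_NormedModule)).
      - apply (is_derive_comp f (fun s => x0 + s)). exact D1.
        apply (is_derive_plus (K:=R_AbsRing) (V:=R_NormedModule)).
        apply is_derive_const. apply is_derive_id.
      - apply is_derive_const.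
      - apply (is_derive_scal_l (K:=R_AbsRing) (V:=R_NormedModule) (fun s => s)). apply is_derive_id. }
    simpl_R. ring. }
  assert (Hb : forall s, Rmin 0 h <= s <= Rmax 0 h -> Rabs (f1 (x0 + s) - f1 x0) <= B * Rabs h).
  { intros s Hs.
    assert (Lp := lip f1 f2 x0 (x0 + s) B).
    apply Rle_trans with (B * Rabs (x0 + s - x0)).
    - apply Lp.
      + intros t Ht. apply H. revert Ht Hs Hh. unfold Rmin, Rmax, Rabs.
        repeat destruct Rle_dec; repeat destruct Rcase_abs; lra.
      + intros t Ht. apply H. revert Ht Hs Hh. unfold Rmin, Rmax, Rabs.
        repeat destruct Rle_dec; repeat destruct Rcase_abs; lra.
    - assert (0 <= B).
      { destruct (H x0) as [_ [_ HB]]. rewrite Rminus_diag, Rabs_R0. apply Rle_trans with (Rabs h); auto. apply Rabs_pos.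
        apply Rle_trans with (Rabs (f2 x0)); auto. apply Rabs_pos. }
      apply Rmult_le_compat_l; auto.
      replace (x0 + s - x0) with s by ring. revert Hs. unfold Rmin, Rmax, Rabs.
      repeat destruct Rle_dec; repeat destruct Rcase_abs; lra. }
  pose proof (lip Rf (fun s => f1 (x0 + s) - f1 x0) 0 h (B * Rabs h) Hr Hb) as L.
  unfold Rf in L. replace (x0 + 0) with x0 in L by ring.
  replace (f x0 - f x0 - 0 * f1 x0) with 0 in L by ring.
  rewrite Rminus_0_r, Rminus_0_r in L.
  replace (B * h ^ 2) with (B * Rabs h * Rabs h); auto.
  rewrite Rmult_assoc, <- Rabs_mult, Rabs_right. ring. nra.
Qed.

Lemma deriv_from_bound (F : R -> R) x0 l d C : 0 < d ->
  (forall h, Rabs h <= d -> Rabs (F (x0 + h) - F x0 - h * l) <= C * h ^ 2) ->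
  is_derive F x0 l.
Proof.
  intros Hd H. apply is_derive_Reals. intros eps Heps.
  assert (HC : 0 <= C).
  { specialize (H d). rewrite Rabs_right in H by lra. specialize (H (Rle_refl _)).
    pose proof (Rabs_pos (F (x0 + d) - F x0 - d * l)).
    assert (0 <= C * d ^ 2) by lra. assert (0 < d ^ 2) by nra.
    apply Rnot_lt_le. intros Hn. nra. }
  assert (Hd' : 0 < Rmin d (eps / (C + 1))).
  { apply Rmin_pos; auto. apply Rdiv_lt_0_compat; lra. }
  exists (mkposreal _ Hd'). intros h Hh0 Hh. simpl in Hh.
  pose proof (Rmin_l d (eps / (C + 1))). pose proof (Rmin_r d (eps / (C + 1))).
  specialize (H h ltac:(lra)).
  replace ((F (x0 + h) - F x0) / h - l) with ((F (x0 + h) - F x0 - h * l) / h) by (field; auto).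
  unfold Rdiv. rewrite Rabs_mult, Rabs_inv.
  assert (0 < Rabs h) by (apply Rabs_pos_lt; auto).
  apply Rle_lt_trans with (C * h ^ 2 * / Rabs h).
  { apply Rmult_le_compat_r; auto. left; apply Rinv_0_lt_compat; auto. }
  replace (C * h ^ 2 * / Rabs h) with (C * Rabs h).
  2:{ replace (h ^ 2) with (Rabs h * Rabs h). field. lra.
      rewrite <- Rabs_mult. rewrite Rabs_right; [ring|nra]. }
  assert (Rabs h < eps / (C + 1)) by lra.
  apply Rle_lt_trans with ((C + 1) * Rabs h). nra.
  replace eps with ((C + 1) * (eps / (C + 1))) by (field; lra).
  apply Rmult_lt_compat_l; lra.
Qed.

Lemma Icv_deriv (F : R -> R -> R) (F1 : R -> R) x0 J d C : 0 < d ->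
  (forall x, Rabs (x - x0) <= d -> exists l, Icv (F x) l) ->
  Icv F1 J ->
  (forall h u, Rabs h <= d -> Rabs (F (x0 + h) u - F x0 u - h * F1 u) <= C * h ^ 2 * q u) ->
  is_derive (fun x => integral_R (F x)) x0 J.
Proof.
  intros Hd Hex HJ Hr.
  apply (deriv_from_bound _ x0 J d (C * PI)); auto.
  intros h Hh.
  destruct (Hex (x0 + h)) as [l1 H1]. { replace (x0 + h - x0) with h by ring; auto. }
  destruct (Hex x0) as [l0 H0]. { rewrite Rminus_diag, Rabs_R0; lra. }
  rewrite (Icv_RInt_gen _ _ H1), (Icv_RInt_gen _ _ H0).
  assert (Hrem : Icv (fun u => F (x0 + h) u - F x0 u - h * F1 u) (l1 - l0 - h * J)).
  { apply Icv_minus. apply Icv_minus; auto. apply Icv_scal; auto. }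
  assert (HB : Icv (fun u => (C * h ^ 2) * q u) ((C * h ^ 2) * PI)) by (apply Icv_scal, Icv_q).
  assert (HBn : Icv (fun u => - ((C * h ^ 2) * q u)) (- ((C * h ^ 2) * PI))).
  { apply (Icv_ext (fun u => (-1) * ((C * h ^ 2) * q u))). intros; ring.
    replace (- (C * h ^ 2 * PI)) with ((-1) * (C * h ^ 2 * PI)) by ring. apply Icv_scal; auto. }
  assert (U : l1 - l0 - h * J <= C * h ^ 2 * PI).
  { apply (Icv_le _ _ _ _ Hrem HB). intros u. specialize (Hr h u Hh).
    revert Hr. unfold Rabs; destruct Rcase_abs; lra. }
  assert (Lo : - (C * h ^ 2 * PI) <= l1 - l0 - h * J).
  { apply (Icv_le _ _ _ _ HBn Hrem). intros u. specialize (Hr h u Hh).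
    revert Hr. unfold Rabs; destruct Rcase_abs; lra. }
  replace (C * PI * h ^ 2) with (C * h ^ 2 * PI) by ring.
  unfold Rabs; destruct Rcase_abs; lra.
Qed.


Lemma exp_mono x y : x <= y -> exp x <= exp y.
Proof. intros H. destruct (Rle_lt_or_eq_dec x y H) as [H1 | ->]. left; apply exp_increasing; auto. lra. Qed.

Lemma exp_le1 x : x <= 0 -> exp x <= 1.
Proof. intros H. rewrite <- exp_0. apply exp_mono; auto. Qed.

Lemma exp_neg_inv z : exp (- z) * exp z = 1.
Proof. rewrite <- exp_plus. replace (- z + z) with 0 by ring. apply exp_0. Qed.

Lemma z_exp z : 0 <= z -> z * exp (- z) <= 1.
Proof.
  intros Hz. pose proof (exp_ineq1_le z). pose proof (exp_neg_inv z).
  pose proof (exp_pos (-z)). nra.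
Qed.

Lemma z2_exp z : 0 <= z -> z ^ 2 * exp (- z) <= 4.
Proof.
  intros Hz. pose proof (exp_ineq1_le (z/2)).
  assert (E : exp z = exp (z/2) * exp (z/2)) by (rewrite <- exp_plus; f_equal; field).
  pose proof (exp_neg_inv z). pose proof (exp_pos (-z)).
  assert (z ^ 2 <= 4 * exp z) by nra. nra.
Qed.

Lemma exp_le_q_aux z : 0 <= z -> exp (- z) * (1 + z) <= 1.
Proof.
  intros Hz. pose proof (exp_ineq1_le z). pose proof (exp_neg_inv z). pose proof (exp_pos (-z)). nra.
Qed.

Definition gau (t : R) := exp (- t ^ 2).

Lemma gau_cont t : continuous gau t.
Proof. apply cont_of_deriv. unfold gau. auto_derive. auto. Qed.

Lemma gau_q t : Rabs (gau t) <= 1 * q t.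
Proof.
  unfold gau, q. rewrite Rabs_right by (left; apply exp_pos).
  pose proof (exp_le_q_aux (t ^ 2) (pow2_ge_0 t)).
  assert (0 < 1 + t ^ 2) by nra.
  rewrite Rmult_1_l. apply (Rmult_le_reg_r (1 + t ^ 2)); auto.
  rewrite Rinv_l by lra. replace (- t ^ 2) with (- (t ^ 2)) by ring. lra.
Qed.

Lemma gau_pos t : 0 <= gau t.
Proof. left; apply exp_pos. Qed.

Definition Gint := integral_R gau.

Lemma Icv_gau : Icv gau Gint.
Proof.
  destruct (Icv_dom gau 1 gau_cont gau_q) as [l Hl].
  unfold Gint. rewrite (Icv_RInt_gen _ _ Hl). exact Hl.
Qed.

Lemma Gint_ge0 : 0 <= Gint.
Proof. apply (Icv_pos_ge0 gau); [apply gau_pos | apply Icv_gau]. Qed.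

Definition Fv (a u : R) := exp (- (a ^ 2 * (1 + u ^ 2))) * q u.
Definition Fv1 (a u : R) := -2 * a * exp (- (a ^ 2 * (1 + u ^ 2))).
Definition Fv2 (a u : R) := (-2 + 4 * (a ^ 2 * (1 + u ^ 2))) * exp (- (a ^ 2 * (1 + u ^ 2))).

Lemma Fv_cont a u : continuous (Fv a) u.
Proof. apply cont_of_deriv. unfold Fv, q. auto_derive. nra. Qed.

Lemma Fv_bound a u : Rabs (Fv a u) <= 1 * q u.
Proof.
  unfold Fv. rewrite Rabs_mult. rewrite (Rabs_right (q u)) by (left; apply q_pos).
  rewrite Rabs_right by (left; apply exp_pos). apply Rmult_le_compat_r. left; apply q_pos.
  apply exp_le1. pose proof (pow2_ge_0 a). pose proof (pow2_ge_0 u). nra.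
Qed.

Lemma Fv_ex a : exists l, Icv (Fv a) l.
Proof. apply (Icv_dom _ 1); [apply Fv_cont | apply Fv_bound]. Qed.

Definition L2 (a : R) := integral_R (Fv a).

Lemma Icv_L2 a : Icv (Fv a) (L2 a).
Proof. destruct (Fv_ex a) as [l Hl]. unfold L2. rewrite (Icv_RInt_gen _ _ Hl). exact Hl. Qed.

Lemma Fv_deriv a u : is_derive (fun a => Fv a u) a (Fv1 a u).
Proof.
  unfold Fv, Fv1, q. auto_derive. nra. eqR. replace (a * (a * 1) * (1 + u * (u * 1))) with (a ^ 2 * (1 + u ^ 2)) by ring. field. nra.
Qed.

Lemma Fv1_deriv a u : is_derive (fun a => Fv1 a u) a (Fv2 a u).
Proof. unfold Fv1, Fv2. auto_derive. auto. eqR. replace (a * (a * 1) * (1 + u * (u * 1))) with (a ^ 2 * (1 + u ^ 2)) by ring. ring. Qed.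

Lemma Fv2_bound a0 a u : 0 < a0 -> Rabs (a - a0) <= a0 / 2 ->
  Rabs (Fv2 a u) <= (72 / a0 ^ 2) * q u.
Proof.
  intros Ha0 Ha.
  set (w := 1 + u ^ 2). set (z := a ^ 2 * w).
  assert (Hw : 1 <= w) by (unfold w; pose proof (pow2_ge_0 u); lra).
  assert (Haa : a0 / 2 <= a) by (revert Ha; unfold Rabs; destruct Rcase_abs; lra).
  assert (Hz : 0 <= z) by (unfold z; pose proof (pow2_ge_0 a); nra).
  assert (Hwz : w * a0 ^ 2 <= 4 * z).
  { unfold z. assert (a0 ^ 2 <= 4 * a ^ 2) by nra. nra. }
  pose proof (z_exp z Hz). pose proof (z2_exp z Hz). pose proof (exp_pos (- z)).
  unfold Fv2. fold w. fold z.
  assert (q u = / w) by reflexivity. rewrite H2.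
  rewrite Rabs_mult, (Rabs_right (exp _)) by lra.
  assert (Rabs (-2 + 4 * z) <= 2 + 4 * z) by (unfold Rabs; destruct Rcase_abs; lra).
  assert (0 < a0 ^ 2) by nra.
  apply Rle_trans with ((2 + 4 * z) * exp (- z)).
  { apply Rmult_le_compat_r; lra. }
  apply (Rmult_le_reg_r (w * a0 ^ 2)). nra.
  replace (72 / a0 ^ 2 * / w * (w * a0 ^ 2)) with 72 by (field; lra).
  apply Rle_trans with ((2 + 4 * z) * exp (- z) * (4 * z)).
  { apply Rmult_le_compat_l; auto. nra. }
  nra.
Qed.

Lemma Icv_gau_scaled a : 0 < a -> Icv (fun u => exp (- (a ^ 2 * u ^ 2))) (Gint / a).
Proof.
  intros Ha.
  pose proof (Icv_scal _ _ (/ a) (Icv_lin gau Gint a 0 Icv_gau Ha)) as H.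
  replace (Gint / a) with (/ a * Gint) by (field; lra).
  revert H. apply Icv_ext. intros w. unfold gau.
  replace (- (a * w + 0) ^ 2) with (- (a ^ 2 * w ^ 2)) by ring. field. lra.
Qed.

Lemma L2_deriv a0 : 0 < a0 -> is_derive L2 a0 (-2 * exp (- a0 ^ 2) * Gint).
Proof.
  intros Ha0. unfold L2.
  apply (Icv_deriv Fv (Fv1 a0) a0 _ (a0 / 2) (72 / a0 ^ 2)).
  - lra.
  - intros x _. apply Fv_ex.
  - pose proof (Icv_scal _ _ (-2 * a0 * exp (- a0 ^ 2)) (Icv_gau_scaled a0 Ha0)) as H.
    replace (-2 * exp (- a0 ^ 2) * Gint) with (-2 * a0 * exp (- a0 ^ 2) * (Gint / a0)) by (field; lra).
    revert H. apply Icv_ext. intros u. unfold Fv1.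
    rewrite Rmult_assoc, <- exp_plus. f_equal. f_equal. ring.
  - intros h u Hh.
    pose proof (taylor2 (fun a => Fv a u) (fun a => Fv1 a u) (fun a => Fv2 a u) a0 (a0/2)
      (72 / a0 ^ 2 * q u) h) as T.
    replace (72 / a0 ^ 2 * h ^ 2 * q u) with (72 / a0 ^ 2 * q u * h ^ 2) by ring.
    apply T; auto.
    intros t Ht. split; [apply Fv_deriv|]. split; [apply Fv1_deriv|].
    apply Fv2_bound; auto.
Qed.

Definition Eg (a : R) := RInt gau 0 a.

Lemma Eg_deriv a : is_derive Eg a (gau a).
Proof.
  apply (is_derive_RInt (V:=R_NormedModule) gau Eg 0 a).
  - exists (mkposreal 1 Rlt_0_1). intros y _. unfold Eg. apply (RInt_correct (V:=R_CompleteNormedModule)).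
    apply cont_ex, gau_cont.
  - apply gau_cont.
Qed.

Definition Phi (a : R) := L2 a + 2 * Gint * Eg a.

Lemma Phi_deriv a : 0 < a -> is_derive Phi a 0.
Proof.
  intros Ha. unfold Phi. eapply is_derive_eq.
  { apply (is_derive_plus (K:=R_AbsRing) (V:=R_NormedModule)).
    apply L2_deriv; auto.
    apply is_derive_scal. apply Eg_deriv. }
  simpl_R. unfold gau. replace (a * (a * 1)) with (a ^ 2) by ring. ring.
Qed.

Lemma Phi_const a b : 0 < a -> 0 < b -> Phi b = Phi a.
Proof.
  intros Ha Hb.
  pose proof (lip Phi (fun _ => 0) a b 0) as L.
  assert (Rabs (Phi b - Phi a) <= 0).
  { rewrite <- (Rmult_0_l (Rabs (b - a))). apply L.
    - intros t Ht. apply Phi_deriv. revert Ht. unfold Rmin, Rmax. destruct Rle_dec; lra.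
    - intros. rewrite Rabs_R0. lra. }
  pose proof (Rabs_pos (Phi b - Phi a)).
  assert (Rabs (Phi b - Phi a) = 0) by lra.
  apply Rabs_eq_0 in H1. lra.
Qed.


Lemma Fv_pos a u : 0 <= Fv a u.
Proof. unfold Fv. pose proof (exp_pos (- (a ^ 2 * (1 + u ^ 2)))). pose proof (q_pos u). nra. Qed.

Lemma L2_le_pi a : L2 a <= PI.
Proof.
  apply (Icv_le _ _ _ _ (Icv_L2 a) Icv_q). intros u.
  pose proof (Fv_bound a u). rewrite Rabs_right in H by (apply Rle_ge, Fv_pos). lra.
Qed.

Lemma L2_le_exp a : L2 a <= exp (- a ^ 2) * PI.
Proof.
  apply (Icv_le _ _ _ _ (Icv_L2 a) (Icv_scal _ _ (exp (- a ^ 2)) Icv_q)). intros u.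
  unfold Fv. apply Rmult_le_compat_r. left; apply q_pos.
  apply exp_mono. pose proof (pow2_ge_0 a). pose proof (pow2_ge_0 u). nra.
Qed.

Lemma L2_lower a U : 0 < U -> 2 * atan U - 2 * U * a ^ 2 <= L2 a.
Proof.
  intros HU.
  apply Rle_trans with (RInt (Fv a) (-U) U).
  2:{ apply (Icv_pos_bound _ _ (Fv_pos a) (Icv_L2 a)). lra. }
  apply Rle_trans with (RInt (fun u => q u - a ^ 2) (-U) U).
  { rewrite RInt_minus_R. rewrite RInt_q, RInt_const_R, atan_opp. lra.
    apply cont_ex, q_cont. apply ex_RInt_const. }
  apply RInt_le. lra.
  apply ex_RInt_minus_R. apply cont_ex, q_cont. apply ex_RInt_const.
  apply cont_ex, Fv_cont.
  intros u _. unfold Fv, q.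
  pose proof (exp_ineq1_le (- (a ^ 2 * (1 + u ^ 2)))).
  assert (0 < 1 + u ^ 2) by nra.
  apply (Rmult_le_reg_r (1 + u ^ 2)); auto.
  rewrite Rmult_assoc, Rinv_l by lra. rewrite Rmult_minus_distr_r, Rinv_l by lra. nra.
Qed.

Lemma gau_le1 t : gau t <= 1.
Proof. unfold gau. apply exp_le1. pose proof (pow2_ge_0 t). lra. Qed.

Lemma Eg_bounds a : 0 <= a -> 0 <= Eg a <= a.
Proof.
  intros Ha. unfold Eg. split.
  - apply RInt_ge_0; auto. apply cont_ex, gau_cont. intros; apply gau_pos.
  - pose proof (RInt_const_R 1 0 a) as H2. rewrite Rminus_0_r, Rmult_1_r in H2.
    apply Rle_trans with (RInt (fun _ => 1) 0 a); [| right; exact H2].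
    apply RInt_le; auto. apply cont_ex, gau_cont. apply ex_RInt_const.
    intros; apply gau_le1.
Qed.

Lemma Eg_sym a : RInt gau (-a) a = 2 * Eg a.
Proof.
  unfold Eg. rewrite <- (RInt_Chasles gau (-a) 0 a) by apply cont_ex, gau_cont.
  change plus with Rplus. eqR. rewrite RInt_even. ring.
  intros x. unfold gau. f_equal. ring. apply cont_ex, gau_cont.
Qed.

Lemma Phi_val a : 0 < a -> Phi a = PI.
Proof.
  intros Ha. rewrite (Phi_const 1 a); try lra.
  pose proof Gint_ge0 as HG. pose proof PI_RGT_0.
  apply Rle_antisym.
  - apply Rnot_lt_le. intros Hc.
    set (c := Phi 1) in *.
    set (b := (c - PI) / (4 * Gint + 4)).
    assert (Hb : 0 < b) by (unfold b; apply Rdiv_lt_0_compat; lra).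
    assert (E : Phi b = c) by (apply Phi_const; lra).
    unfold Phi in E. pose proof (L2_le_pi b). pose proof (Eg_bounds b ltac:(lra)).
    assert (2 * Gint * Eg b <= 2 * Gint * b) by (apply Rmult_le_compat_l; lra).
    assert (b * (4 * Gint + 4) = c - PI) by (unfold b; field; lra).
    nra.
  - apply Rnot_lt_le. intros Hc.
    set (c := Phi 1) in *. set (d := PI - c).
    set (U := 8 / d).
    assert (HU : 0 < U) by (unfold U; apply Rdiv_lt_0_compat; unfold d; lra).
    set (b := Rmin 1 (d / (8 * U))).
    assert (Hb : 0 < b) by (unfold b; apply Rmin_pos; [lra| apply Rdiv_lt_0_compat; unfold d; lra]).
    pose proof (Rmin_l 1 (d / (8 * U))) as Hb1. pose proof (Rmin_r 1 (d / (8 * U))) as Hb2. fold b in Hb1, Hb2.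
    assert (E : Phi b = c) by (apply Phi_const; lra).
    unfold Phi in E. pose proof (L2_lower b U HU). pose proof (Eg_bounds b ltac:(lra)).
    pose proof (atan_big U HU).
    assert (0 <= 2 * Gint * Eg b) by nra.
    assert (/ U = d / 8) by (unfold U; field; unfold d; lra).
    assert (b * (8 * U) <= d).
    { apply Rle_trans with (d / (8 * U) * (8 * U)). apply Rmult_le_compat_r; lra. right; field; unfold d; lra. }
    assert (b ^ 2 <= b) by nra.
    assert (U * b ^ 2 <= U * b) by (apply Rmult_le_compat_l; lra). assert (d = PI - c) by reflexivity. lra.
Qed.

Lemma exp_neg_le_inv x : 0 <= x -> exp (- x) <= / (1 + x).
Proof.
  intros Hx. pose proof (exp_le_q_aux x Hx).
  apply (Rmult_le_reg_r (1 + x)). lra. rewrite Rinv_l by lra. lra.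
Qed.

Lemma Gint_sq : Gint ^ 2 = PI.
Proof.
  pose proof Gint_ge0 as HG. pose proof PI_RGT_0.
  assert (Key : forall eps, 0 < eps -> Rabs (Gint ^ 2 - PI) <= eps).
  { intros eps Heps.
    destruct Icv_gau as [_ C].
    destruct (C (eps / (2 * (Gint + 1)))) as [M HM].
    { apply Rdiv_lt_0_compat; lra. }
    set (a := Rmax (Rabs M) (Rmax 1 (2 * PI / eps))).
    pose proof (Rmax_l (Rabs M) (Rmax 1 (2 * PI / eps))).
    pose proof (Rmax_r (Rabs M) (Rmax 1 (2 * PI / eps))).
    pose proof (Rmax_l 1 (2 * PI / eps)). pose proof (Rmax_r 1 (2 * PI / eps)).
    fold a in H0, H1.
    pose proof (Rle_abs M). pose proof (Rle_abs (-M)). rewrite Rabs_Ropp in H5.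
    assert (Ha : 0 < a) by lra.
    specialize (HM (-a) a ltac:(lra) ltac:(lra)). rewrite Eg_sym in HM.
    pose proof (Phi_val a Ha) as P. unfold Phi in P.
    pose proof (L2_le_exp a). pose proof (Icv_pos_ge0 _ _ (Fv_pos a) (Icv_L2 a)).
    pose proof (exp_neg_le_inv (a ^ 2) (pow2_ge_0 a)).
    replace (- (a ^ 2)) with (- a ^ 2) in H8 by ring.
    assert (/ (1 + a ^ 2) <= / a).
    { apply Rinv_le_contravar; auto. nra. }
    assert (/ a <= eps / (2 * PI)).
    { replace (eps / (2 * PI)) with (/ (2 * PI / eps)) by (field; lra).
      apply Rinv_le_contravar; [apply Rdiv_lt_0_compat; lra | lra]. }
    assert (HL : L2 a <= eps / 2).
    { apply Rle_trans with (exp (- a ^ 2) * PI); auto.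
      apply Rle_trans with (eps / (2 * PI) * PI). apply Rmult_le_compat_r; lra.
      right; field; lra. }
    replace (Gint ^ 2 - PI) with (Gint * (Gint - 2 * Eg a) - L2 a) by (rewrite <- P; ring).
    assert (HE : Rabs (Gint - 2 * Eg a) <= eps / (2 * (Gint + 1))).
    { rewrite <- Rabs_Ropp. replace (- (Gint - 2 * Eg a)) with (2 * Eg a - Gint) by ring. auto. }
    assert (Gint * Rabs (Gint - 2 * Eg a) <= eps / 2).
    { apply Rle_trans with (Gint * (eps / (2 * (Gint + 1)))). apply Rmult_le_compat_l; auto.
      apply Rle_trans with ((Gint + 1) * (eps / (2 * (Gint + 1)))).
      apply Rmult_le_compat_r. left; apply Rdiv_lt_0_compat; lra. lra. right; field; lra. }
    apply Rle_trans with (Rabs (Gint * (Gint - 2 * Eg a)) + Rabs (L2 a)).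
    { unfold Rminus. rewrite <- (Rabs_Ropp (L2 a)). apply Rabs_triang. }
    rewrite Rabs_mult, (Rabs_right Gint) by lra. rewrite (Rabs_right (L2 a)) by lra. lra. }
  apply Rminus_diag_uniq. apply Rabs_eq_0. apply Rle_antisym; [|apply Rabs_pos].
  apply Rnot_lt_le. intros Hlt. specialize (Key (Rabs (Gint ^ 2 - PI) / 2) ltac:(lra)). lra.
Qed.

Lemma Gint_val : Gint = sqrt PI.
Proof. rewrite <- Gint_sq, sqrt_pow2; auto. apply Gint_ge0. Qed.

Lemma L2_formula a : 0 < a -> L2 a = PI - 2 * sqrt PI * Eg a.
Proof. intros Ha. pose proof (Phi_val a Ha). unfold Phi in H. rewrite Gint_val in H. lra. Qed.


Ltac nzR := apply Rgt_not_eq, Rlt_gt; pose proof PI_RGT_0;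
  repeat match goal with |- 0 < PI => lra | |- 0 < _ * _ => apply Rmult_lt_0_compat end; try lra; nra.

Definition cc se t := se / (PI * (se ^ 2 + t ^ 2)).
Definition cc1 se t := -2 * se * t / (PI * (se ^ 2 + t ^ 2) ^ 2).
Definition cc2 se t := se * (6 * t ^ 2 - 2 * se ^ 2) / (PI * (se ^ 2 + t ^ 2) ^ 3).

Lemma cauchy_eq se t : 0 < se -> cauchy_pdf 0 se t = cc se t.
Proof.
  intros Hse. unfold cauchy_pdf, cc. pose proof PI_RGT_0.
  assert (0 < se ^ 2 + t ^ 2) by nra.
  replace (1 + ((t - 0) / se) ^ 2) with ((se ^ 2 + t ^ 2) / se ^ 2) by (field; lra).
  field. lra.
Qed.

Lemma abs_div_le num den K : 0 < den -> Rabs num <= K * den -> Rabs (num / den) <= K.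
Proof.
  intros Hd H. unfold Rdiv. rewrite Rabs_mult, Rabs_inv, (Rabs_right den) by lra.
  apply (Rmult_le_reg_r den); auto. rewrite Rmult_assoc, Rinv_l by lra. lra.
Qed.

Lemma cc_bound se t : 0 < se -> Rabs (cc se t) <= / (PI * se).
Proof.
  intros Hse. pose proof PI_RGT_0. unfold cc. apply abs_div_le. apply Rmult_lt_0_compat; nra.
  rewrite Rabs_right by lra.
  replace (/ (PI * se) * (PI * (se ^ 2 + t ^ 2))) with ((se ^ 2 + t ^ 2) / se) by (field; lra).
  apply (Rmult_le_reg_r se); auto. unfold Rdiv. rewrite Rmult_assoc, Rinv_l by lra. nra.
Qed.

Lemma cc1_bound se t : 0 < se -> Rabs (cc1 se t) <= / (PI * se ^ 2).
Proof.
  intros Hse. pose proof PI_RGT_0. unfold cc1.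
  set (Q := se ^ 2 + t ^ 2).
  assert (HQ : se ^ 2 <= Q) by (unfold Q; nra).
  assert (HQ2 : 2 * se * Rabs t <= Q).
  { unfold Q. pose proof (pow2_ge_0 (se - t)). pose proof (pow2_ge_0 (se + t)).
    unfold Rabs; destruct Rcase_abs; nra. }
  apply abs_div_le. assert (0 < Q) by nra. apply Rmult_lt_0_compat; [lra | apply pow_lt; lra].
  replace (/ (PI * se ^ 2) * (PI * Q ^ 2)) with (Q ^ 2 / se ^ 2) by (field; lra).
  assert (A : Rabs (-2 * se * t) = 2 * se * Rabs t).
  { unfold Rabs; repeat destruct Rcase_abs; nra. }
  rewrite A. pose proof (Rabs_pos t).
  assert (B : 2 * se * Rabs t * se ^ 2 <= Q ^ 2) by nra.
  unfold Rdiv. apply Rle_trans with ((2 * se * Rabs t * se ^ 2) * / se ^ 2).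
  right; field; lra. apply Rmult_le_compat_r; [left; apply Rinv_0_lt_compat; nra | exact B].
Qed.

Lemma cc2_bound se t : 0 < se -> Rabs (cc2 se t) <= 6 / (PI * se ^ 3).
Proof.
  intros Hse. pose proof PI_RGT_0. unfold cc2.
  set (Q := se ^ 2 + t ^ 2).
  assert (HQ : se ^ 2 <= Q) by (unfold Q; nra).
  assert (H6 : Rabs (6 * t ^ 2 - 2 * se ^ 2) <= 6 * Q).
  { unfold Q. pose proof (pow2_ge_0 t). unfold Rabs; destruct Rcase_abs; nra. }
  apply abs_div_le. assert (0 < Q) by nra. apply Rmult_lt_0_compat; [lra | apply pow_lt; lra].
  replace (6 / (PI * se ^ 3) * (PI * Q ^ 3)) with (6 * Q ^ 3 / se ^ 3) by (field; lra).
  rewrite Rabs_mult, (Rabs_right se) by lra.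
  assert (HQ0 : 0 < Q) by nra.
  assert (se ^ 4 <= Q ^ 2).
  { replace (se ^ 4) with (se ^ 2 * se ^ 2) by ring. replace (Q ^ 2) with (Q * Q) by ring.
    apply Rmult_le_compat; nra. }
  assert (se ^ 4 * Q <= Q ^ 3).
  { replace (Q ^ 3) with (Q ^ 2 * Q) by ring. apply Rmult_le_compat_r; lra. }
  assert (Rabs (6 * t ^ 2 - 2 * se ^ 2) * se ^ 4 <= 6 * Q * se ^ 4) by (apply Rmult_le_compat_r; nra).
  assert (B : se * Rabs (6 * t ^ 2 - 2 * se ^ 2) * se ^ 3 <= 6 * Q ^ 3).
  { replace (se * Rabs (6 * t ^ 2 - 2 * se ^ 2) * se ^ 3) with (Rabs (6 * t ^ 2 - 2 * se ^ 2) * se ^ 4) by ring.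
    apply Rle_trans with (6 * Q * se ^ 4); auto. replace (6 * Q * se ^ 4) with (6 * (se ^ 4 * Q)) by ring.
    apply Rmult_le_compat_l; lra. }
  unfold Rdiv. apply Rle_trans with ((se * Rabs (6 * t ^ 2 - 2 * se ^ 2) * se ^ 3) * / se ^ 3).
  right; field; lra. apply Rmult_le_compat_r; [left; apply Rinv_0_lt_compat; apply pow_lt; lra | exact B].
Qed.

Lemma cc_deriv se v x : 0 < se -> is_derive (fun x => cc se (x - v)) x (cc1 se (x - v)).
Proof.
  intros Hse. pose proof PI_RGT_0. pose proof (Rle_0_sqr (x + - v)). unfold Rsqr in *. unfold cc, cc1. auto_derive.
  all: repeat split; try nzR.
  eqR. field. split; [nra|lra].
Qed.

Lemma cc1_deriv se v x : 0 < se -> is_derive (fun x => cc1 se (x - v)) x (cc2 se (x - v)).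
Proof.
  intros Hse. pose proof PI_RGT_0. pose proof (Rle_0_sqr (x + - v)). unfold Rsqr in *. unfold cc1, cc2. auto_derive.
  all: repeat split; try nzR.
  eqR. field. split; [nra|lra].
Qed.

Lemma cc_cont se s0 th0 x u : 0 < se -> continuous (fun u => cc se (x - (s0 * u + th0))) u.
Proof.
  intros Hse. pose proof PI_RGT_0. pose proof (Rle_0_sqr (x + - (s0 * u + th0))). unfold Rsqr in *. apply cont_of_deriv. unfold cc. auto_derive.
  all: repeat split; try nzR.
Qed.

Lemma cc1_cont se s0 th0 x u : 0 < se -> continuous (fun u => cc1 se (x - (s0 * u + th0))) u.
Proof.
  intros Hse. pose proof PI_RGT_0. pose proof (Rle_0_sqr (x + - (s0 * u + th0))). unfold Rsqr in *. apply cont_of_deriv. unfold cc1. auto_derive.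
  all: repeat split; try nzR.
Qed.

Lemma cont_mult_R (f g : R -> R) x : continuous f x -> continuous g x -> continuous (fun x => f x * g x) x.
Proof. intros H1 H2. apply (continuous_mult (K:=R_AbsRing) f g x H1 H2). Qed.

Lemma conv_ex se s0 th0 (g : R -> R) Cg x : 0 < se -> (forall u, continuous g u) ->
  (forall u, Rabs (g u) <= Cg * q u) ->
  exists l, Icv (fun u => g u * cc se (x - (s0 * u + th0))) l.
Proof.
  intros Hse Hc Hb. apply (Icv_dom _ (Cg * / (PI * se))).
  - intros u. apply cont_mult_R; auto. apply cc_cont; auto.
  - intros u. rewrite Rabs_mult. pose proof (cc_bound se (x - (s0 * u + th0)) Hse).
    pose proof (Rabs_pos (g u)). pose proof (Rabs_pos (cc se (x - (s0 * u + th0)))).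
    pose proof (q_pos u). specialize (Hb u).
    apply Rle_trans with (Cg * q u * / (PI * se)). apply Rmult_le_compat; auto.
    right; ring.
Qed.

Lemma conv1_ex se s0 th0 (g : R -> R) Cg x : 0 < se -> (forall u, continuous g u) ->
  (forall u, Rabs (g u) <= Cg * q u) ->
  exists l, Icv (fun u => g u * cc1 se (x - (s0 * u + th0))) l.
Proof.
  intros Hse Hc Hb. apply (Icv_dom _ (Cg * / (PI * se ^ 2))).
  - intros u. apply cont_mult_R; auto. apply cc1_cont; auto.
  - intros u. rewrite Rabs_mult. pose proof (cc1_bound se (x - (s0 * u + th0)) Hse).
    pose proof (Rabs_pos (g u)). pose proof (Rabs_pos (cc1 se (x - (s0 * u + th0)))).
    pose proof (q_pos u). specialize (Hb u).
    apply Rle_trans with (Cg * q u * / (PI * se ^ 2)). apply Rmult_le_compat; auto.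
    right; ring.
Qed.

Lemma conv_deriv se s0 th0 (g : R -> R) Cg x0 : 0 < se -> (forall u, continuous g u) ->
  (forall u, Rabs (g u) <= Cg * q u) ->
  is_derive (fun x => integral_R (fun u => g u * cc se (x - (s0 * u + th0)))) x0
    (integral_R (fun u => g u * cc1 se (x0 - (s0 * u + th0)))).
Proof.
  intros Hse Hc Hb.
  destruct (conv1_ex se s0 th0 g Cg x0 Hse Hc Hb) as [J HJ].
  rewrite (Icv_RInt_gen _ _ HJ).
  apply (Icv_deriv (fun x u => g u * cc se (x - (s0 * u + th0))) (fun u => g u * cc1 se (x0 - (s0 * u + th0))) x0 J 1 (Cg * (6 / (PI * se ^ 3)))).
  - lra.
  - intros x _. apply (conv_ex se s0 th0 g Cg x); auto.
  - exact HJ.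
  - intros h u Hh. simpl.
    set (v := s0 * u + th0).
    pose proof (taylor2 (fun x => cc se (x - v)) (fun x => cc1 se (x - v)) (fun x => cc2 se (x - v))
      x0 1 (6 / (PI * se ^ 3)) h) as T.
    specialize (T (fun t _ => conj (cc_deriv se v t Hse) (conj (cc1_deriv se v t Hse) (cc2_bound se _ Hse))) Hh).
    replace (g u * cc se (x0 + h - v) - g u * cc se (x0 - v) - h * (g u * cc1 se (x0 - v)))
      with (g u * (cc se (x0 + h - v) - cc se (x0 - v) - h * cc1 se (x0 - v))) by ring.
    rewrite Rabs_mult. specialize (Hb u).
    pose proof (Rabs_pos (g u)). pose proof (q_pos u).
    apply Rle_trans with (Cg * q u * (6 / (PI * se ^ 3) * h ^ 2)).
    apply Rmult_le_compat; auto. apply Rabs_pos. right. field. repeat split; nzR.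
Qed.


Lemma Icv_unlin f l s m : 0 < s -> Icv (fun w => s * f (s * w + m)) l -> Icv f l.
Proof.
  intros Hs H.
  pose proof (Icv_lin _ _ (/ s) (- m / s) H (Rinv_0_lt_compat _ Hs)) as H2.
  revert H2. apply Icv_ext. intros t.
  replace (s * (/ s * t + - m / s) + m) with t by (field; lra). field; lra.
Qed.

Definition gam (w : R) := / sqrt (2 * PI) * exp (- w ^ 2 / 2).

Lemma sqrt2PI_pos : 0 < sqrt (2 * PI).
Proof. apply sqrt_lt_R0. pose proof PI_RGT_0. lra. Qed.

Lemma normal_tr th0 s0 w : 0 < s0 -> s0 * normal_pdf th0 s0 (s0 * w + th0) = gam w.
Proof.
  intros Hs. unfold normal_pdf, gam. pose proof sqrt2PI_pos.
  replace (- (s0 * w + th0 - th0) ^ 2 / (2 * s0 ^ 2)) with (- w ^ 2 / 2) by (field; lra).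
  field. lra.
Qed.

Lemma gam_cont w : continuous gam w.
Proof. apply cont_of_deriv. unfold gam. auto_derive. auto. Qed.

Lemma poly_gauss w : (1 + w ^ 2) ^ 2 * exp (- w ^ 2 / 2) <= 21.
Proof.
  set (z := w ^ 2 / 2). assert (Hz : 0 <= z) by (unfold z; pose proof (pow2_ge_0 w); lra).
  replace (- w ^ 2 / 2) with (- z) by (unfold z; field).
  replace ((1 + w ^ 2) ^ 2) with (1 + 4 * z + 4 * z ^ 2) by (unfold z; field).
  pose proof (z_exp z Hz). pose proof (z2_exp z Hz). pose proof (exp_le1 (- z) ltac:(lra)).
  replace ((1 + 4 * z + 4 * z ^ 2) * exp (- z)) with (exp (- z) + 4 * (z * exp (- z)) + 4 * (z ^ 2 * exp (- z))) by ring.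
  lra.
Qed.

Lemma bound_to_q (f : R -> R) C w : Rabs (f w) * (1 + w ^ 2) <= C -> Rabs (f w) <= C * q w.
Proof.
  intros H. unfold q. assert (0 < 1 + w ^ 2) by (pose proof (pow2_ge_0 w); lra).
  apply (Rmult_le_reg_r (1 + w ^ 2)); auto. rewrite Rmult_assoc, Rinv_l by lra. lra.
Qed.

Lemma gam_bound w : Rabs (gam w) <= 21 / sqrt (2 * PI) * q w.
Proof.
  apply bound_to_q. unfold gam. pose proof sqrt2PI_pos. pose proof (exp_pos (- w ^ 2 / 2)).
  rewrite Rabs_right. 2:{ apply Rle_ge, Rmult_le_pos; [left; apply Rinv_0_lt_compat|]; lra. }
  pose proof (poly_gauss w). pose proof (pow2_ge_0 w).
  assert ((1 + w ^ 2) * exp (- w ^ 2 / 2) <= 21).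
  { apply Rle_trans with ((1 + w ^ 2) ^ 2 * exp (- w ^ 2 / 2)); auto.
    apply Rmult_le_compat_r; [lra | nra]. }
  replace (/ sqrt (2 * PI) * exp (- w ^ 2 / 2) * (1 + w ^ 2))
    with (/ sqrt (2 * PI) * ((1 + w ^ 2) * exp (- w ^ 2 / 2))) by ring.
  replace (21 / sqrt (2 * PI)) with (/ sqrt (2 * PI) * 21) by (field; lra).
  apply Rmult_le_compat_l; auto. left; apply Rinv_0_lt_compat; lra.
Qed.

Lemma gN_bound s0 th0 w : 0 < s0 ->
  Rabs ((s0 * w + th0) * gam w) <= 21 * (s0 + Rabs th0) / sqrt (2 * PI) * q w.
Proof.
  intros Hs. apply (bound_to_q (fun w => (s0 * w + th0) * gam w)). unfold gam. pose proof sqrt2PI_pos. pose proof (exp_pos (- w ^ 2 / 2)).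
  rewrite Rabs_mult. rewrite (Rabs_right (/ _ * _)).
  2:{ apply Rle_ge, Rmult_le_pos; [left; apply Rinv_0_lt_compat|]; lra. }
  pose proof (poly_gauss w). pose proof (pow2_ge_0 w).
  assert (A : Rabs (s0 * w + th0) <= (s0 + Rabs th0) * (1 + w ^ 2)).
  { apply Rle_trans with (Rabs (s0 * w) + Rabs th0). apply Rabs_triang.
    rewrite Rabs_mult, Rabs_right by lra.
    assert (Rabs w <= 1 + w ^ 2) by (unfold Rabs; destruct Rcase_abs; nra).
    pose proof (Rabs_pos th0). nra. }
  pose proof (Rabs_pos (s0 * w + th0)). pose proof (Rabs_pos th0).
  apply Rle_trans with ((s0 + Rabs th0) * (1 + w ^ 2) * (/ sqrt (2 * PI) * exp (- w ^ 2 / 2)) * (1 + w ^ 2)).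
  { apply Rmult_le_compat_r; [lra|]. apply Rmult_le_compat_r; auto.
    apply Rmult_le_pos; [left; apply Rinv_0_lt_compat|]; lra. }
  replace ((s0 + Rabs th0) * (1 + w ^ 2) * (/ sqrt (2 * PI) * exp (- w ^ 2 / 2)) * (1 + w ^ 2))
    with ((s0 + Rabs th0) / sqrt (2 * PI) * ((1 + w ^ 2) ^ 2 * exp (- w ^ 2 / 2))) by (field; lra).
  replace (21 * (s0 + Rabs th0) / sqrt (2 * PI)) with ((s0 + Rabs th0) / sqrt (2 * PI) * 21) by (field; lra).
  apply Rmult_le_compat_l; auto. apply Rdiv_le_0_compat; lra.
Qed.

Lemma wgam_bound w : Rabs (w * gam w) <= 21 / sqrt (2 * PI) * q w.
Proof.
  pose proof (gN_bound 1 0 w Rlt_0_1) as H. rewrite Rabs_R0 in H.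
  replace (1 * w + 0) with w in H by ring.
  replace (21 * (1 + 0) / sqrt (2 * PI)) with (21 / sqrt (2 * PI)) in H by (unfold Rdiv; ring). exact H.
Qed.

Lemma gN_cont s0 th0 w : continuous (fun w => (s0 * w + th0) * gam w) w.
Proof. apply cont_of_deriv. unfold gam. auto_derive. auto. Qed.

Lemma wgam_cont w : continuous (fun w => w * gam w) w.
Proof. apply cont_of_deriv. unfold gam. auto_derive. auto. Qed.

Lemma transfer_D th0 s0 se x l : 0 < s0 -> 0 < se ->
  Icv (fun w => gam w * cc se (x - (s0 * w + th0))) l ->
  integral_R (fun th => normal_pdf th0 s0 th * cauchy_pdf 0 se (x - th)) = l.
Proof.
  intros Hs Hse H. apply Icv_RInt_gen. apply (Icv_unlin _ _ s0 th0 Hs).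
  revert H. apply Icv_ext. intros w. rewrite cauchy_eq by auto.
  rewrite <- (normal_tr th0 s0 w Hs). ring.
Qed.

Lemma transfer_N th0 s0 se x l : 0 < s0 -> 0 < se ->
  Icv (fun w => (s0 * w + th0) * gam w * cc se (x - (s0 * w + th0))) l ->
  integral_R (fun th => th * normal_pdf th0 s0 th * cauchy_pdf 0 se (x - th)) = l.
Proof.
  intros Hs Hse H. apply Icv_RInt_gen. apply (Icv_unlin _ _ s0 th0 Hs).
  revert H. apply Icv_ext. intros w. rewrite cauchy_eq by auto.
  rewrite <- (normal_tr th0 s0 w Hs). ring.
Qed.


Ltac norm_exp e := repeat match goal with |- context [exp ?X] =>
  assert_fails (constr_eq X e); replace X with e by field end.

Lemma sqrt2_pos : 0 < sqrt 2.
Proof. apply sqrt_lt_R0. lra. Qed.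

Lemma sqrt2_sq : sqrt 2 * sqrt 2 = 2.
Proof. apply sqrt_sqrt. lra. Qed.

Lemma y2 a : (a / sqrt 2) ^ 2 = a ^ 2 / 2.
Proof.
  pose proof sqrt2_pos. pose proof sqrt2_sq.
  replace ((a / sqrt 2) ^ 2) with (a ^ 2 / (sqrt 2 * sqrt 2)) by (field; lra).
  rewrite H0. reflexivity.
Qed.

Definition hfun a w := exp (- w ^ 2 / 2) * / (a ^ 2 + w ^ 2).

Lemma hfun_icv a : 0 < a ->
  Icv (hfun a) (L2 (a / sqrt 2) * exp ((a / sqrt 2) ^ 2) / a).
Proof.
  intros Ha. set (y := a / sqrt 2).
  pose proof (Icv_lin _ _ (/ a) 0 (Icv_L2 y) (Rinv_0_lt_compat _ Ha)) as H.
  pose proof (Icv_scal _ _ (exp (y ^ 2) / a) H) as H2.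
  replace (L2 y * exp (y ^ 2) / a) with (exp (y ^ 2) / a * L2 y) by (field; lra).
  revert H2. apply Icv_ext. intros w. unfold Fv, q, hfun.
  assert (E : exp (- (y ^ 2 * (1 + (/ a * w + 0) ^ 2))) = exp (- y ^ 2) * exp (- w ^ 2 / 2)).
  { rewrite <- exp_plus. f_equal. unfold y. rewrite y2. field. lra. }
  rewrite E. pose proof (exp_neg_inv (y ^ 2)).
  replace (- y ^ 2) with (- (y ^ 2)) by ring.
  assert (0 < a ^ 2 + w ^ 2) by (pose proof (pow2_ge_0 w); nra).
  assert (0 < 1 + (/ a * w + 0) ^ 2) by (pose proof (pow2_ge_0 (/ a * w + 0)); lra).
  replace (1 + (/ a * w + 0) ^ 2) with ((a ^ 2 + w ^ 2) / a ^ 2) by (field; lra).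
  field_simplify; [| lra | split; lra].
  replace (exp (y ^ 2) * exp (- (y ^ 2))) with 1 by lra.
  field. lra.
Qed.

Lemma gauss_half : Icv (fun w => exp (- w ^ 2 / 2)) (sqrt 2 * sqrt PI).
Proof.
  pose proof sqrt2_pos. pose proof sqrt2_sq.
  pose proof (Icv_lin _ _ (/ sqrt 2) 0 Icv_gau (Rinv_0_lt_compat _ H)) as H1.
  pose proof (Icv_scal _ _ (sqrt 2) H1) as H2. rewrite Gint_val in H2.
  revert H2. apply Icv_ext. intros w. unfold gau.
  replace (- (/ sqrt 2 * w + 0) ^ 2) with (- w ^ 2 / 2).
  field. lra.
  replace ((/ sqrt 2 * w + 0) ^ 2) with (w ^ 2 / (sqrt 2 * sqrt 2)) by (field; lra).
  rewrite H0. field.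
Qed.

Definition Pf a w := w * exp (- w ^ 2 / 2) * / (a ^ 2 + w ^ 2).
Definition pf a w := ((1 + a ^ 2) * / (a ^ 2 + w ^ 2) - 1) * exp (- w ^ 2 / 2)
   - 2 * (w ^ 2 * exp (- w ^ 2 / 2) * / (a ^ 2 + w ^ 2) ^ 2).

Lemma Pf_deriv a w : 0 < a -> is_derive (Pf a) w (pf a w).
Proof.
  intros Ha. assert (0 < a ^ 2 + w ^ 2) by (pose proof (pow2_ge_0 w); nra).
  unfold Pf, pf. auto_derive. lra. eqR.
  norm_exp (- w ^ 2 / 2). field. lra.
Qed.

Lemma pf_cont a w : 0 < a -> continuous (pf a) w.
Proof.
  intros Ha. assert (0 < a ^ 2 + w ^ 2) by (pose proof (pow2_ge_0 w); nra).
  apply cont_of_deriv. unfold pf. auto_derive. repeat split; try nzR.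
Qed.

Lemma pf_icv a : 0 < a -> Icv (pf a) 0.
Proof.
  intros Ha. apply (Icv_exact (Pf a)).
  - intros w. apply Pf_deriv; auto.
  - intros w. apply pf_cont; auto.
  - intros eps Heps. exists (/ eps + 1). intros w Hw.
    assert (Hie : 0 < / eps) by (apply Rinv_0_lt_compat; auto).
    assert (Hw0 : 0 < Rabs w) by lra.
    assert (Hq : 0 < a ^ 2 + w ^ 2) by (pose proof (pow2_ge_0 w); nra).
    assert (A : Rabs (Pf a w) * Rabs w <= 1).
    { unfold Pf. rewrite <- Rabs_mult.
      replace (w * exp (- w ^ 2 / 2) * / (a ^ 2 + w ^ 2) * w)
        with ((w ^ 2 * / (a ^ 2 + w ^ 2)) * exp (- w ^ 2 / 2)) by ring.
      pose proof (exp_pos (- w ^ 2 / 2)). pose proof (exp_le1 (- w ^ 2 / 2) ltac:(pose proof (pow2_ge_0 w); lra)).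
      assert (B : 0 <= w ^ 2 * / (a ^ 2 + w ^ 2) <= 1).
      { split. apply Rmult_le_pos. apply pow2_ge_0. left; apply Rinv_0_lt_compat; auto.
        apply (Rmult_le_reg_r (a ^ 2 + w ^ 2)); auto. rewrite Rmult_assoc, Rinv_l by lra. nra. }
      rewrite Rabs_right by (apply Rle_ge, Rmult_le_pos; lra). nra. }
    assert (Rabs (Pf a w) <= / Rabs w).
    { apply (Rmult_le_reg_r (Rabs w)); auto. rewrite Rinv_l by lra. lra. }
    assert (/ Rabs w <= eps).
    { rewrite <- (Rinv_inv eps). apply Rinv_le_contravar; auto. lra. }
    lra.
Qed.

Definition I1v a := L2 (a / sqrt 2) * exp ((a / sqrt 2) ^ 2) / a.

Lemma I2_icv a : 0 < a ->
  Icv (fun w => w ^ 2 * exp (- w ^ 2 / 2) * / (a ^ 2 + w ^ 2) ^ 2)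
      (((1 + a ^ 2) * I1v a - sqrt 2 * sqrt PI) / 2).
Proof.
  intros Ha.
  pose proof (Icv_minus _ _ _ _ (Icv_minus _ _ _ _ (Icv_scal _ _ (1 + a ^ 2) (hfun_icv a Ha)) gauss_half) (pf_icv a Ha)) as H.
  pose proof (Icv_scal _ _ (/ 2) H) as H2.
  replace (((1 + a ^ 2) * I1v a - sqrt 2 * sqrt PI) / 2)
    with (/ 2 * ((1 + a ^ 2) * (L2 (a / sqrt 2) * exp ((a / sqrt 2) ^ 2) / a) - sqrt 2 * sqrt PI - 0))
    by (unfold I1v; field; lra).
  revert H2. apply Icv_ext. intros w. unfold hfun, pf. field.
  pose proof (pow2_ge_0 w). nra.
Qed.


Lemma gam_even w : gam (- w) = gam w.
Proof. unfold gam. replace ((- w) ^ 2) with (w ^ 2) by ring. reflexivity. Qed.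

Lemma cc_even se t : cc se (- t) = cc se t.
Proof. unfold cc. replace ((- t) ^ 2) with (t ^ 2) by ring. reflexivity. Qed.

Lemma cc1_odd se t : cc1 se (- t) = - cc1 se t.
Proof. unfold cc1. replace ((- t) ^ 2) with (t ^ 2) by ring. unfold Rdiv. ring. Qed.

Lemma arg_neg s0 th0 w : th0 - (s0 * - w + th0) = - (th0 - (s0 * w + th0)).
Proof. ring. Qed.

Lemma D0_icv s0 se th0 : 0 < s0 -> 0 < se ->
  Icv (fun w => gam w * cc se (th0 - (s0 * w + th0)))
      (/ sqrt (2 * PI) * (se / (PI * s0 ^ 2)) * I1v (se / s0)).
Proof.
  intros Hs Hse. pose proof PI_RGT_0. pose proof sqrt2PI_pos.
  pose proof (Icv_scal _ _ (/ sqrt (2 * PI) * (se / (PI * s0 ^ 2))) (hfun_icv (se / s0) (Rdiv_lt_0_compat _ _ Hse Hs))) as H1.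
  revert H1. apply Icv_ext. intros w. unfold gam, cc, hfun.
  assert (0 < (se / s0) ^ 2 + w ^ 2) by (pose proof (pow2_ge_0 w); assert (0 < se / s0) by (apply Rdiv_lt_0_compat; lra); nra).
  assert (0 < se ^ 2 + (th0 - (s0 * w + th0)) ^ 2) by (pose proof (pow2_ge_0 (th0 - (s0 * w + th0))); nra).
  field. repeat split; lra.
Qed.

Lemma D1_icv s0 se th0 : 0 < s0 -> 0 < se ->
  Icv (fun w => gam w * cc1 se (th0 - (s0 * w + th0))) 0.
Proof.
  intros Hs Hse.
  destruct (conv1_ex se s0 th0 gam _ th0 Hse gam_cont gam_bound) as [l Hl].
  replace 0 with l; auto. apply (Icv_odd (fun w => gam w * cc1 se (th0 - (s0 * w + th0)))); [|exact Hl].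
  intros w. rewrite gam_even, arg_neg, cc1_odd; ring.
Qed.

Lemma Nodd_icv s0 se th0 : 0 < s0 -> 0 < se ->
  Icv (fun w => w * gam w * cc se (th0 - (s0 * w + th0))) 0.
Proof.
  intros Hs Hse.
  destruct (conv_ex se s0 th0 (fun w => w * gam w) _ th0 Hse wgam_cont wgam_bound) as [l Hl].
  replace 0 with l; auto. apply (Icv_odd (fun w => w * gam w * cc se (th0 - (s0 * w + th0)))); [|exact Hl].
  intros w. rewrite gam_even, arg_neg, cc_even; ring.
Qed.

Lemma M1_icv s0 se th0 : 0 < s0 -> 0 < se ->
  Icv (fun w => w * gam w * cc1 se (th0 - (s0 * w + th0)))
      (/ sqrt (2 * PI) * (2 * se / (PI * s0 ^ 3)) *
       (((1 + (se / s0) ^ 2) * I1v (se / s0) - sqrt 2 * sqrt PI) / 2)).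
Proof.
  intros Hs Hse. pose proof PI_RGT_0. pose proof sqrt2PI_pos.
  pose proof (Icv_scal _ _ (/ sqrt (2 * PI) * (2 * se / (PI * s0 ^ 3))) (I2_icv (se / s0) (Rdiv_lt_0_compat _ _ Hse Hs))) as H1.
  revert H1. apply Icv_ext. intros w. unfold gam, cc1.
  assert (0 < (se / s0) ^ 2 + w ^ 2) by (pose proof (pow2_ge_0 w); assert (0 < se / s0) by (apply Rdiv_lt_0_compat; lra); nra).
  assert (0 < se ^ 2 + (th0 - (s0 * w + th0)) ^ 2) by (pose proof (pow2_ge_0 (th0 - (s0 * w + th0))); nra).
  field. repeat split; lra.
Qed.

Lemma L2_pos y : 0 < L2 y.
Proof.
  set (c := exp (- (y ^ 2 * 2)) / 2).
  assert (Hc : 0 < c) by (unfold c; pose proof (exp_pos (- (y ^ 2 * 2))); lra).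
  apply Rlt_le_trans with (RInt (fun _ => c) (-1) 1).
  { rewrite RInt_const_R. lra. }
  apply Rle_trans with (RInt (Fv y) (-1) 1).
  2:{ apply (Icv_pos_bound _ _ (Fv_pos y) (Icv_L2 y)). lra. }
  apply RInt_le. lra. apply ex_RInt_const. apply cont_ex, Fv_cont.
  intros u Hu. unfold c, Fv, q.
  assert (u ^ 2 <= 1) by nra.
  assert (0 < 1 + u ^ 2) by nra.
  pose proof (pow2_ge_0 y).
  assert (exp (- (y ^ 2 * 2)) <= exp (- (y ^ 2 * (1 + u ^ 2)))) by (apply exp_mono; nra).
  assert (/ 2 <= / (1 + u ^ 2)) by (apply Rinv_le_contravar; lra).
  unfold Rdiv. apply Rmult_le_compat; auto. left; apply exp_pos. lra.
Qed.

Lemma erfcx_eq y : 0 < y -> erfcx y = exp (y ^ 2) * L2 y / PI.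
Proof.
  intros Hy. pose proof PI_RGT_0.
  unfold erfcx. change (RInt (fun t => exp (- t ^ 2)) 0 y) with (Eg y).
  rewrite L2_formula by auto.
  pose proof (sqrt_sqrt PI ltac:(lra)). pose proof (sqrt_lt_R0 PI ltac:(lra)).
  set (sp := sqrt PI) in *. rewrite <- H0. field. lra.
Qed.


Theorem mainTheorem6 (s0 se th0 : R) (hs0 : 0 < s0) (hse : 0 < se) :
  is_derive (posterior_mean th0 s0 se) th0
    (1 + (se / s0) ^ 2
     - sqrt (2 / PI) * (se / s0) / erfcx ((se / s0) / sqrt 2)).
Proof.
  pose proof PI_RGT_0 as HPI. pose proof sqrt2PI_pos as HS2P.
  set (gN := fun u => (s0 * u + th0) * gam u).
  set (CN := 21 * (s0 + Rabs th0) / sqrt (2 * PI)).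
  set (CD := 21 / sqrt (2 * PI)).
  assert (gNc : forall u, continuous gN u) by (intros; apply gN_cont).
  assert (gNb : forall u, Rabs (gN u) <= CN * q u) by (intros; apply gN_bound; auto).
  set (Nw := fun x => integral_R (fun u => gN u * cc se (x - (s0 * u + th0)))).
  set (Dw := fun x => integral_R (fun u => gam u * cc se (x - (s0 * u + th0)))).
  assert (Ext : forall x, Nw x / Dw x = posterior_mean th0 s0 se x).
  { intros x. unfold posterior_mean.
    destruct (conv_ex se s0 th0 gN CN x hse gNc gNb) as [lN HN].
    destruct (conv_ex se s0 th0 gam CD x hse gam_cont gam_bound) as [lD HD].
    rewrite (transfer_N th0 s0 se x lN hs0 hse HN), (transfer_D th0 s0 se x lD hs0 hse HD).
    unfold Nw, Dw. rewrite (Icv_RInt_gen _ _ HN), (Icv_RInt_gen _ _ HD). reflexivity. }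
  apply (is_derive_ext (fun x => Nw x / Dw x)); [exact Ext|].
  set (a := se / s0). assert (Ha : 0 < a) by (unfold a; apply Rdiv_lt_0_compat; auto).
  set (y := a / sqrt 2). assert (Hy : 0 < y) by (unfold y; apply Rdiv_lt_0_compat; auto; apply sqrt2_pos).
  set (D0 := / sqrt (2 * PI) * (se / (PI * s0 ^ 2)) * I1v a).
  set (M1 := / sqrt (2 * PI) * (2 * se / (PI * s0 ^ 3)) * (((1 + a ^ 2) * I1v a - sqrt 2 * sqrt PI) / 2)).
  assert (HD0 : Dw th0 = D0).
  { unfold Dw. apply Icv_RInt_gen. apply D0_icv; auto. }
  assert (HN0 : Nw th0 = th0 * D0 + s0 * 0).
  { unfold Nw. apply Icv_RInt_gen.
    apply (Icv_ext (fun w => th0 * (gam w * cc se (th0 - (s0 * w + th0))) + s0 * (w * gam w * cc se (th0 - (s0 * w + th0))))).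
    { intros w. unfold gN. ring. }
    apply Icv_plus; apply Icv_scal; [apply D0_icv | apply Nodd_icv]; auto. }
  assert (HD1 : integral_R (fun u => gam u * cc1 se (th0 - (s0 * u + th0))) = 0).
  { apply Icv_RInt_gen. apply D1_icv; auto. }
  assert (HN1 : integral_R (fun u => gN u * cc1 se (th0 - (s0 * u + th0))) = th0 * 0 + s0 * M1).
  { apply Icv_RInt_gen.
    apply (Icv_ext (fun w => th0 * (gam w * cc1 se (th0 - (s0 * w + th0))) + s0 * (w * gam w * cc1 se (th0 - (s0 * w + th0))))).
    { intros w. unfold gN. ring. }
    apply Icv_plus; apply Icv_scal; [apply D1_icv | apply M1_icv]; auto. }
  assert (HL : 0 < L2 y) by apply L2_pos.
  assert (HI1 : I1v a = L2 y * exp (y ^ 2) / a) by reflexivity.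
  assert (HD0p : 0 < D0).
  { unfold D0. rewrite HI1. pose proof (exp_pos (y ^ 2)).
    apply Rmult_lt_0_compat. apply Rmult_lt_0_compat. apply Rinv_0_lt_compat; auto.
    apply Rdiv_lt_0_compat; auto. apply Rmult_lt_0_compat; auto. apply pow_lt; auto.
    apply Rdiv_lt_0_compat; auto. apply Rmult_lt_0_compat; auto. }
  eapply is_derive_eq.
  { apply is_derive_div.
    - apply (conv_deriv se s0 th0 gN CN th0 hse gNc gNb).
    - apply (conv_deriv se s0 th0 gam CD th0 hse gam_cont gam_bound).
    - fold (Dw th0). rewrite HD0. lra. }
  fold (Nw th0) (Dw th0). rewrite HN1, HD1, HD0, HN0.
  fold y. rewrite (erfcx_eq y Hy).
  unfold D0, M1. rewrite HI1.
  pose proof (sqrt_sqrt PI ltac:(lra)) as Hsp. pose proof (sqrt_lt_R0 PI ltac:(lra)) as Hsp0.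
  pose proof sqrt2_pos as Hs2. pose proof sqrt2_sq as Hs2s.
  assert (E1 : sqrt (2 * PI) = sqrt 2 * sqrt PI) by (apply sqrt_mult; lra).
  assert (E2 : sqrt (2 / PI) = sqrt 2 / sqrt PI).
  { unfold Rdiv. rewrite sqrt_mult_alt by lra. rewrite sqrt_inv. reflexivity. }
  rewrite E1, E2. pose proof (exp_pos (y ^ 2)).
  unfold a in *. set (sp := sqrt PI) in *. set (s2 := sqrt 2) in *. set (ey := exp (y ^ 2)) in *.
  set (L := L2 y) in *. rewrite <- Hsp.
  eqR. field. repeat split; try lra; nra.
Qed.
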